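(* Let $\lambda,\mu$ be partitions, $n$ a positive integer, and let $M$ be a multiline queue of shape $\mu$ on $n$ columns whose $j$-th column contains exactly $\lambda'_j$ balls for each $j$. Then $\rho_N(M)=M(\lambda')$ if and only if the row word $\mathrm{rw}(M)$ is a lattice word.
   Context: For a partition $\nu$ with conjugate $\nu'$, a multiline queue of shape $\nu$ on $n$ columns is a tuple $(B_1,\dots,B_{\nu_1})$ of subsets of $[n]$ with $|B_j|=\nu'_j$, drawn with rows bottom to top, columns $1..n$ left to right, ball in $(r,j)$ iff $j\in B_r$; tuples with empty top rows are identified with the tuple obtained by deleting those rows. $M(\nu)=(M_1,\dots,M_{\nu_1})$ with $M_j=\{1,\dots,\nu'_j\}$ is the left-justified multiline queue of shape $\nu$. The row word $\mathrm{rw}(M)$ scans rows bottom to top, each row left to right, recording column numbers of balls; the column word $\mathrm{cw}(M)$ scans columns left to right, each top to bottom, recording row numbers. A word is a lattice word if every initial segment contains at least as many letters $i$ as letters $i+1$ for every $i\ge1$. Collapsing: $\mathrm{Par}_i(w)$ writes ''('' for each letter $i+1$ and '')'' for each letter $i$ of $w$, left to right, and iteratively matches a ''('' with a '')'' to its right when adjacent or separated only by matched parentheses. $e_i^\star(B)$ moves every ball of row $i+1$ whose letter in $\mathrm{cw}(B)$ is unmatched in $\mathrm{Par}_i(\mathrm{cw}(B))$ down to row $i$ in the same column. With $L$ the number of rows, $e^\star_{[a,b]}=e^\star_ae^\star_{a+1}\cdots e^\star_b$ (acting right to left) and $\rho_N(B)=e^\star_{[1,L-1]}\cdots e^\star_{[1,1]}(B)$.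 *)

(* Defs.v *)
From mathcomp Require Import all_boot.
Set Implicit Arguments. Unset Strict Implicit. Unset Printing Implicit Defensive.

(* Conventions: columns 1..n are encoded by 'I_n (column c+1 is the ordinal c);
   a multiline queue (B_1,...,B_L) is a list [:: B_1; ...; B_L] of subsets of
   'I_n (bottom row first).  Row r (1-indexed) is stored at list index r-1.
   Letters of row/column words are 1-indexed naturals as in the paper. *)

Definition is_part (l : seq nat) : bool := sorted geq l && all (fun x => 0 < x) l.

(* Conjugate partition: (conj l)`_j = l'_{j+1} = #{ i | l_i >= j+1 }. *)
Definition conj (l : seq nat) : seq nat :=
  [seq count (fun x => j < x) l | j <- iota 0 (head 0 l)].

Section MLQ.
Variable n : nat.
Notation mlq := (seq {set 'I_n}).

Definition has_shape (nu : seq nat) (B : mlq) : Prop :=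
  map (fun s : {set 'I_n} => #|s|) B = conj nu.

Definition col_count (B : mlq) (j : 'I_n) : nat := count (fun s : {set 'I_n} => j \in s) B.

Definition Mlq (nu : seq nat) : mlq := [seq [set i : 'I_n | i < c] | c <- conj nu].

(* identification of tuples differing by empty top rows *)
Fixpoint strip (B : mlq) : mlq :=
  match B with
  | [::] => [::]
  | s :: B' => let t := strip B' in
               if (t == [::]) && (s == set0) then [::] else s :: t
  end.

Definition rw (B : mlq) : seq nat :=
  flatten [seq [seq (val j).+1 | j <- enum 'I_n & j \in s] | s : {set 'I_n} <- B].

(* column word, with each letter (a row number) tagged by its column:
   columns left to right, each top to bottom *)
Definition cwp (B : mlq) : seq ('I_n * nat) :=
  flatten [seq [seq (j, r.+1) | r <- rev (iota 0 (size B)) & j \in nth set0 B r]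
          | j <- enum 'I_n].

Definition cw (B : mlq) : seq nat := [seq p.2 | p <- cwp B].

(* Par_i: the letters i+1 ("(" , tagged true) and i (")" , tagged false) of
   cw(B), in order, each tagged with the column of its ball (within the
   subword of letters i, i+1 each pair (column, bracket) occurs at most once). *)
Definition brk (i : nat) (B : mlq) : seq ('I_n * bool) :=
  [seq (p.1, p.2 == i.+1) | p <- cwp B & (p.2 == i) || (p.2 == i.+1)].

End MLQ.

Fixpoint reduce1 (T : Type) (s : seq (T * bool)) : seq (T * bool) :=
  match s with
  | [::] => [::]
  | x :: s' =>
      match s' with
      | [::] => s
      | y :: t => if x.2 && ~~ y.2 then t else x :: reduce1 s'
      end
  end.

Section Ops.
Variable n : nat.
Notation mlq := (seq {set 'I_n}).

(* unmatched parentheses after iterated matching (size steps suffice) *)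
Definition unmatched (i : nat) (B : mlq) : seq ('I_n * bool) :=
  iter (size (cwp B)) (@reduce1 'I_n) (brk i B).

Definition estar (i : nat) (B : mlq) : mlq :=
  let S := [set j : 'I_n | (j, true) \in unmatched i B] in
  [seq if r.+1 == i then nth set0 B r :|: S
       else if r.+1 == i.+1 then nth set0 B r :\: S
       else nth set0 B r | r <- iota 0 (size B)].

(* e^star_[a,b] = e_a e_{a+1} ... e_b (e_b applied first) *)
Definition estar_int (a b : nat) (B : mlq) : mlq :=
  foldr (fun i acc => estar i acc) B (iota a (b.+1 - a)).

Definition rhoN (B : mlq) : mlq :=
  foldl (fun acc k => estar_int 1 k acc) B (iota 1 (size B).-1).

End Ops.

Definition lattice (w : seq nat) : Prop :=
  forall (k i : nat), count_mem i.+2 (take k w) <= count_mem i.+1 (take k w).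

(* Main.v *)
Require Import Defs.
From mathcomp Require Import all_boot zify.
Set Implicit Arguments. Unset Strict Implicit. Unset Printing Implicit Defensive.


Section Brackets.
Variable T : eqType.
Notation W := (seq (T * bool)).

Fixpoint nxt (x : T * bool) (s : W) : option (T * bool) :=
  match s with [::] => None | c :: s' => if c == x then ohead s' else nxt x s' end.
Fixpoint aft (x : T * bool) (s : W) : option W :=
  match s with [::] => None | c :: s' => if c == x then Some s' else aft x s' end.
Definition good (t : W) := path orb false (map snd t).

Lemma red_cons2 c d (t : W) :
  reduce1 (c :: d :: t) = if c.2 && ~~ d.2 then t else c :: reduce1 (d :: t).
Proof. by []. Qed.

Lemma red_subseq (s : W) : subseq (reduce1 s) s.
Proof.
elim: s => [|c s IH]; first by [].
case: s IH => [|d t] IH; first exact: subseq_refl.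
rewrite red_cons2; case: ifP => _.
  apply: (subseq_trans (subseq_cons t d)).
  exact: subseq_cons.
by rewrite /= eqxx.
Qed.

Lemma red_mem (s : W) z : z \in reduce1 s -> z \in s.
Proof. exact: (mem_subseq (red_subseq s)). Qed.

Lemma red_uniq (s : W) : uniq s -> uniq (reduce1 s).
Proof. exact: subseq_uniq (red_subseq s). Qed.

Lemma red_size (s : W) : reduce1 s = s \/ size (reduce1 s) < size s.
Proof.
elim: s => [|c s IH] /=; first by left.
case: s IH => [|d t] IH; first by left.
case: ifP => _; first by right; rewrite /= ltnS leqW.
case: IH => [->|H]; [by left | by right; rewrite /= ltnS].
Qed.

Lemma red_iter_fixed m (s : W) : ~~ (size s > m) -> reduce1 (iter m (@reduce1 T) s) = iter m (@reduce1 T) s.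
Proof.
elim: m s => [|m IH] s Hs.
  by case: s Hs.
rewrite iterSr.
case: (red_size s) => [E|H].
  rewrite E.
  have Hfix : forall k, iter k (@reduce1 T) s = s.
    by elim=> [|k IHk] //=; rewrite IHk E.
  by rewrite Hfix E.
apply: IH; rewrite -leqNgt -ltnS; apply: leq_trans H _; rewrite leqNgt.
done.
Qed.

Lemma nxt_mem x (s : W) y : nxt x s = Some y -> y \in s.
Proof.
elim: s => [|c s IH] //=.
case: ifP => _.
  by case: s {IH} => [|d t] //= [->]; rewrite !inE eqxx orbT.
by move/IH => H; rewrite inE H orbT.
Qed.

Lemma nxt_memx x (s : W) y : nxt x s = Some y -> x \in s.
Proof.
elim: s => [|c s IH] //=.
case: ifP => [/eqP->|_]; first by rewrite inE eqxx.
by move/IH => H; rewrite inE H orbT.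
Qed.

Lemma aft_memx x (s : W) t : aft x s = Some t -> x \in s.
Proof.
elim: s => [|c s IH] //=.
case: ifP => [/eqP->|_]; first by rewrite inE eqxx.
by move/IH => H; rewrite inE H orbT.
Qed.

Lemma nxt_cons (x c : T * bool) (s : W) : nxt x (c :: s) = if c == x then ohead s else nxt x s.
Proof. by []. Qed.

Lemma nxt_pair_shrink (x y : T * bool) (s : W) : x.2 -> ~~ y.2 -> nxt x s = Some y ->
  size (reduce1 s) < size s.
Proof.
move=> Hx Hy.
elim: s => [|c s IH] //.
case: s IH => [|d t] IH.
  by rewrite nxt_cons; case: ifP.
rewrite red_cons2; case: ifP => Hcd.
  by rewrite /= ltnS leqW.
rewrite nxt_cons; case: eqP => [Ecx [Edy]|_ H].
  by move: Hcd; rewrite Ecx Edy Hx Hy.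
by rewrite /= ltnS; apply: IH.
Qed.

Lemma F1_step (x y : T * bool) (s : W) : uniq s -> x.2 -> ~~ y.2 ->
  (x \in s -> nxt x s = Some y) -> x \in reduce1 s -> nxt x (reduce1 s) = Some y.
Proof.
move=> + Hx Hy.
elim: s => [|c s IH]; first by [].
case: s IH => [|d t] IH; first by move=> _ H; exact: H.
rewrite red_cons2 => /andP [Hc Hu].
case: ifP => Hcd.
  move=> H Hxt.
  have Hxs : x \in [:: c, d & t] by rewrite !inE Hxt !orbT.
  move: (H Hxs); rewrite !nxt_cons.
  case: eqP => [Ecx|Ncx].
    by move: Hc; rewrite Ecx !inE Hxt orbT.
  case: eqP => [Edx|Ndx].
    by move: Hu; rewrite /= Edx Hxt.
  done.
move=> H; rewrite inE.
case: eqP => [Ecx _|Ncx Hxr].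
  have Hxs : x \in [:: c, d & t] by rewrite Ecx mem_head.
  have := H Hxs; rewrite nxt_cons Ecx eqxx /= => -[Edy].
  move: Hy; rewrite -Edy => Hy; rewrite eqxx.
  case: t {IH H Hu Hcd Hc Hxs} => [|e t] //.
  by rewrite (negbTE Hy).
rewrite nxt_cons; case: eqP => [E|_]; first by rewrite E in Ncx.
apply: IH => // Hxs.
have := H; rewrite inE Hxs orbT => /(_ isT); rewrite nxt_cons.
by case: eqP => // E; rewrite E in Ncx.
Qed.

Lemma F2_step (x z : T * bool) (s : W) : uniq s -> x.2 -> z.2 -> x != z ->
  (z \in s -> x \in s /\ nxt x s = Some z) ->
  z \in reduce1 s -> x \in reduce1 s /\ nxt x (reduce1 s) = Some z.
Proof.
move=> + Hx Hz Nxz.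
elim: s => [|c s IH]; first by [].
case: s IH => [|d t] IH; first by move=> _ H; exact: H.
rewrite red_cons2 => /andP [Hc Hu].
case: ifP => Hcd.
  move=> H Hzt.
  have Hzs : z \in [:: c, d & t] by rewrite !inE Hzt !orbT.
  case: (H Hzs); rewrite !nxt_cons => Hxs.
  case: eqP => [Ecx [Edz]|Ncx].
    by move: Hcd; rewrite Edz Hz andbF.
  case: eqP => [Edx|Ndx].
    by move: Hcd; rewrite Edx Hx andbF.
  move=> Hn; split => //.
  move: Hxs; rewrite !inE => /or3P [/eqP E|/eqP E|//].
    by case: Ncx; rewrite E.
  by case: Ndx; rewrite E.
move=> H; rewrite inE.
case: eqP => [Ezc _|Nzc Hzr].
  have Hzs : z \in [:: c, d & t] by rewrite Ezc mem_head.
  case: (H Hzs) => Hxs; rewrite nxt_cons.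
  case: eqP => [Ecx|Ncx].
    by move: Nxz; rewrite -Ecx -Ezc eqxx.
  move/nxt_mem => Hzdt.
  by move: Hc; rewrite -Ezc Hzdt.
have Hzdt : z \in d :: t by apply: red_mem.
rewrite nxt_cons.
case: eqP => [Ecx|Ncx].
  have Hzs : z \in [:: c, d & t] by rewrite inE Hzdt orbT.
  have [_ Hn] := H Hzs; rewrite nxt_cons Ecx eqxx /= in Hn; case: Hn => Edz.
  split; first by rewrite inE Ecx eqxx.
  move: Hzr Hu; rewrite Edz.
  case: t {IH H Hzdt Hcd Hzs Hc} => [|e t] //.
  rewrite red_cons2 Hz /=; case: ifP => // _ Hzt /andP [Hzn _].
  by move: Hzn; rewrite inE Hzt orbT.
have HQ : z \in d :: t -> x \in d :: t /\ nxt x (d :: t) = Some z.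
  move=> Hz'.
  have Hzs : z \in [:: c, d & t] by rewrite inE Hz' orbT.
  case: (H Hzs) => Hxs Hn; split.
    by move: Hxs; rewrite inE => /orP [/eqP E|//]; case: Ncx; rewrite E.
  by move: Hn; rewrite nxt_cons; case: eqP.
have [Hxr Hn] := IH Hu HQ Hzr.
by split; [rewrite inE Hxr orbT | exact: Hn].
Qed.

Lemma good_path_true (t : W) : good t -> path orb true (map snd t).
Proof. by case: t => [|c t] //= /andP [_ H]; exact: H. Qed.

Lemma good_red (t : W) : good t -> good (reduce1 t).
Proof.
rewrite /good.
elim: t => [|c t IH]; first by [].
case: t IH => [|d t] IH; first by [].
rewrite red_cons2.
set r := reduce1 (d :: t) in IH *.
rewrite /= => /andP [Hc /andP [_ Hp]].
case: ifP => Hcd.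
  by move: Hcd Hp; rewrite Hc /= => /negbTE ->.
have Hd : d.2 by apply/negbFE; move: Hcd; rewrite Hc.
have H2 : path orb false (map snd (d :: t)) by rewrite /= Hd; rewrite Hd in Hp.
have := IH H2.
rewrite /= Hc /=.
by case: r {IH} => [|e r'] //= /andP [_ ->].
Qed.

Lemma aft_cons (x c : T * bool) (s : W) : aft x (c :: s) = if c == x then Some s else aft x s.
Proof. by []. Qed.

Lemma G1_step (x : T * bool) (s : W) : x.2 ->
  (exists2 t, aft x s = Some t & good t) ->
  (exists2 t, aft x (reduce1 s) = Some t & good t).
Proof.
move=> Hx.
elim: s => [|c s IH]; first by case.
case: s IH => [|d t] IH; first by move=> H; exact: H.
rewrite red_cons2; case: ifP => Hcd.
  case=> r; rewrite [aft x (c :: _)]aft_cons.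
  case: eqP => [Ecx [<-]|Ncx].
    move=> Hg; move: Hcd Hg; rewrite Ecx Hx /good /= => /negbTE ->.
    by [].
  rewrite aft_cons.
  case: eqP => [Edx|Ndx].
    by move: Hcd; rewrite Edx Hx andbF.
  by move=> Hr Hg; exists r.
case=> r; rewrite [aft x (c :: reduce1 _)]aft_cons [aft x (c :: d :: t)]aft_cons.
case: eqP => [Ecx [<-] Hg|Ncx Hr Hg].
  by exists (reduce1 (d :: t)) => //; apply: good_red.
have [r' Hr' Hg'] := IH (ex_intro2 _ _ r Hr Hg).
by exists r'.
Qed.

Lemma iter_inv (P : W -> Prop) m (s : W) : uniq s -> P s ->
  (forall s, uniq s -> P s -> P (reduce1 s)) -> P (iter m (@reduce1 T) s).
Proof.
move=> Hu Hp Hst.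
suff: uniq (iter m (@reduce1 T) s) /\ P (iter m (@reduce1 T) s) by case.
elim: m => [|m [IHu IHp]] //=.
by split; [apply: red_uniq | apply: Hst].
Qed.

Lemma U1 (x y : T * bool) (s : W) m : uniq s -> x.2 -> ~~ y.2 -> nxt x s = Some y ->
  size s <= m -> x \notin iter m (@reduce1 T) s.
Proof.
move=> Hu Hx Hy Hn Hm.
have Hinv : x \in iter m (@reduce1 T) s -> nxt x (iter m (@reduce1 T) s) = Some y.
  apply: (@iter_inv (fun s => x \in s -> nxt x s = Some y)) => //.
  by move=> s' Hu' H; apply: F1_step.
apply/negP => Hin.
have := nxt_pair_shrink Hx Hy (Hinv Hin).
by rewrite red_iter_fixed ?ltnn // -leqNgt.
Qed.

Lemma U2 (x z : T * bool) (s : W) m : uniq s -> x.2 -> z.2 -> x != z -> nxt x s = Some z ->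
  z \in iter m (@reduce1 T) s -> x \in iter m (@reduce1 T) s.
Proof.
move=> Hu Hx Hz Nxz Hn.
have Hinv : z \in iter m (@reduce1 T) s -> x \in iter m (@reduce1 T) s /\ nxt x (iter m (@reduce1 T) s) = Some z.
  apply: (@iter_inv (fun s => z \in s -> x \in s /\ nxt x s = Some z)) => //.
    by move=> _; split => //; apply: nxt_memx Hn.
  by move=> s' Hu' H; apply: F2_step.
by move/Hinv => [].
Qed.

Lemma U3 (x : T * bool) (s : W) t m : uniq s -> x.2 -> aft x s = Some t -> good t ->
  x \in iter m (@reduce1 T) s.
Proof.
move=> Hu Hx Ha Hg.
have : exists2 t, aft x (iter m (@reduce1 T) s) = Some t & good t.
  apply: (@iter_inv (fun s => exists2 t, aft x s = Some t & good t)) => //.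
    by exists t.
  by move=> s' _ H; apply: G1_step.
by case=> t' /aft_memx.
Qed.

End Brackets.


Lemma filter_nil (T : eqType) (a : pred T) (s : seq T) :
  (forall x, x \in s -> ~~ a x) -> filter a s = [::].
Proof.
elim: s => [|c s IH] H //=.
rewrite (negbTE (H c (mem_head _ _))) IH // => x Hx.
by apply: H; rewrite inE Hx orbT.
Qed.

Lemma map_filter_flatten (A B : Type) (f : A -> B) (P : pred A) (J : Type) (g : J -> seq A) (ks : seq J) :
  [seq f p | p <- flatten [seq g k | k <- ks] & P p] = flatten [seq [seq f p | p <- g k & P p] | k <- ks].
Proof.
elim: ks => [|k ks IH] //=.
by rewrite filter_cat map_cat IH.
Qed.

Fixpoint nxtg (T : eqType) (x : T) (s : seq T) : option T :=
  match s with [::] => None | c :: s' => if c == x then ohead s' else nxtg x s' end.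
Fixpoint aftg (T : eqType) (x : T) (s : seq T) : option (seq T) :=
  match s with [::] => None | c :: s' => if c == x then Some s' else aftg x s' end.

Lemma nxtg_map (A B : eqType) (f : A -> B) (x : A) (s : seq A) : injective f ->
  nxtg (f x) (map f s) = omap f (nxtg x s).
Proof.
move=> Hf; elim: s => [|c s IH] //=.
rewrite (inj_eq Hf); case: ifP => // _.
by case: s {IH}.
Qed.

Lemma aftg_map (A B : eqType) (f : A -> B) (x : A) (s : seq A) : injective f ->
  aftg (f x) (map f s) = omap (map f) (aftg x s).
Proof.
move=> Hf; elim: s => [|c s IH] //=.
by rewrite (inj_eq Hf); case: ifP.
Qed.

Lemma nxtg_iota k m a : m <= a -> a.+1 < m + k -> nxtg a (iota m k) = Some a.+1.
Proof.
elim: k m => [|k IH] m Hm Hk /=; first by lia.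
case: eqP => [E|NE].
  subst a; case: k {IH} Hk => [|k] Hk /=; first by lia.
  done.
apply: IH; lia.
Qed.

Lemma aftg_iota k m a : m <= a -> a < m + k -> aftg a (iota m k) = Some (iota a.+1 (m + k - a.+1)).
Proof.
elim: k m => [|k IH] m Hm Hk /=; first by lia.
case: eqP => [E|NE].
  subst a; congr (Some (iota _ _)); lia.
rewrite IH; [congr (Some (iota _ _)); lia|lia|lia].
Qed.

Lemma nxt_ord (n : nat) (j j' : 'I_n) : val j' = (val j).+1 -> nxtg j (enum 'I_n) = Some j'.
Proof.
move=> Ej.
have := @nxtg_map _ _ val j (enum 'I_n) val_inj.
have H1 : (val j).+1 < 0 + n by rewrite add0n -Ej ltn_ord.
rewrite val_enum_ord (nxtg_iota (leq0n _) H1).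
case: (nxtg j (enum 'I_n)) => // k [Ek].
by congr Some; apply: val_inj; rewrite /= -Ek Ej.
Qed.

Lemma aft_ord (n : nat) (j : 'I_n) : exists2 r, aftg j (enum 'I_n) = Some r & (forall k, k \in r -> val j < val k).
Proof.
have := @aftg_map _ _ val j (enum 'I_n) val_inj.
have H1 : val j < 0 + n by rewrite add0n ltn_ord.
rewrite val_enum_ord (aftg_iota (leq0n _) H1).
case: (aftg j (enum 'I_n)) => // r [Er].
exists r => // k Hk.
have : val k \in map val r by apply: map_f.
by rewrite -Er mem_iota => /andP [].
Qed.

Section Flat.
Variables (J T : eqType) (F : J -> seq (T * bool)).

Lemma nxt_cat_l x y (a b : seq (T * bool)) : nxt x a = Some y -> nxt x (a ++ b) = Some y.
Proof.
elim: a => [|c a IH] //=.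
case: ifP => // _.
by case: a {IH}.
Qed.

Lemma nxt_cat_r x (a b : seq (T * bool)) : x \notin a -> nxt x (a ++ b) = nxt x b.
Proof.
elim: a => [|c a IH] //=.
rewrite inE negb_or => /andP [Hc Ha].
by rewrite eq_sym (negbTE Hc) IH.
Qed.

Lemma aft_cat_r x (a b : seq (T * bool)) : x \notin a -> aft x (a ++ b) = aft x b.
Proof.
elim: a => [|c a IH] //=.
rewrite inE negb_or => /andP [Hc Ha].
by rewrite eq_sym (negbTE Hc) IH.
Qed.

Lemma nxt_flat1 (ks : seq J) j x y : j \in ks -> (forall k, x \in F k -> k = j) ->
  nxt x (F j) = Some y -> nxt x (flatten (map F ks)) = Some y.
Proof.
move=> + Hx Hn.
elim: ks => [|k ks IH] //=.
rewrite inE; case: eqP => [<- _|Njk Hj].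
  exact: nxt_cat_l.
rewrite nxt_cat_r; first exact: IH.
by apply/negP => /Hx E; apply: Njk; rewrite E.
Qed.

Lemma nxt_flat2 (ks : seq J) j j' x y rest : nxtg j ks = Some j' -> F j = [:: x] ->
  F j' = y :: rest -> (forall k, x \in F k -> k = j) ->
  nxt x (flatten (map F ks)) = Some y.
Proof.
move=> + Hj Hj' Hx.
elim: ks => [|k ks IH] //=.
case: eqP => [Ekj|Nkj].
  rewrite Ekj Hj /= eqxx.
  by case: ks {IH} => [|k' ks] //= [E]; rewrite E Hj'.
move=> H; rewrite nxt_cat_r; first exact: IH.
by apply/negP => /Hx E; apply: Nkj; rewrite E.
Qed.

Lemma aft_flat (ks : seq J) j x : F j = [:: x] -> (forall k, x \in F k -> k = j) ->
  aft x (flatten (map F ks)) = omap (fun r => flatten (map F r)) (aftg j ks).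
Proof.
move=> Hj Hx.
elim: ks => [|k ks IH] //=.
case: eqP => [Ekj|Nkj].
  by rewrite Ekj Hj /= eqxx.
rewrite aft_cat_r; first exact: IH.
by apply/negP => /Hx E; apply: Nkj; rewrite E.
Qed.

Lemma good_cat (a b : seq (T * bool)) : good a -> good b -> good (a ++ b).
Proof.
rewrite /good map_cat cat_path => -> /=.
case: (map snd b) => [|c l] //= /andP [Hc ->].
by rewrite andbT; move: Hc; case: c; rewrite ?orbT.
Qed.

Lemma good_flat (ks : seq J) : (forall k, k \in ks -> good (F k)) -> good (flatten (map F ks)).
Proof.
elim: ks => [|k ks IH] H //=.
apply: good_cat; first by apply: H; rewrite mem_head.
by apply: IH => k' Hk'; apply: H; rewrite inE Hk' orbT.
Qed.

End Flat.

Section Cols.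
Variable n : nat.
Notation mlq := (seq {set 'I_n}).

Definition row (B : mlq) r := nth set0 B r.

Definition colb (i : nat) (B : mlq) (j : 'I_n) : seq ('I_n * bool) :=
  (if j \in row B i then [:: (j, true)] else [::]) ++
  (if j \in row B i.-1 then [:: (j, false)] else [::]).

Lemma filter_rows (i L : nat) (Q : pred nat) : 0 < i -> i < L ->
  (forall r, Q r -> (r == i.-1) || (r == i)) ->
  [seq r <- rev (iota 0 L) | Q r] =
  (if Q i then [:: i] else [::]) ++ (if Q i.-1 then [:: i.-1] else [::]).
Proof.
move=> Hi HL HQ.
have EL : L = i.-1 + (2 + (L - i.+1)).
  by lia.
rewrite filter_rev EL !iotaD !filter_cat.
rewrite (@filter_nil _ _ (iota 0 i.-1)); last first.
  move=> x; rewrite mem_iota /= add0n => Hx; apply/negP => /HQ.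
  by case/orP => /eqP E; lia.
rewrite (@filter_nil _ _ (iota (0 + i.-1 + 2) _)); last first.
  move=> x; rewrite mem_iota add0n addn2 prednK // => /andP [Hx _]; apply/negP => /HQ.
  by case/orP => /eqP E; lia.
rewrite add0n /= prednK // cats0.
by case: (Q i); case: (Q i.-1).
Qed.

Lemma brk_eq (i : nat) (B : mlq) : 0 < i -> i < size B ->
  brk i B = flatten [seq colb i B j | j <- enum 'I_n].
Proof.
move=> Hi HL.
rewrite /brk /cwp map_filter_flatten; congr flatten; apply: eq_map => j.
rewrite filter_map -filter_predI -map_comp.
rewrite (@filter_rows i (size B)) //; last first.
  move=> r /andP [/= /orP [/eqP E|/eqP E] _]; apply/orP; [left|right]; apply/eqP; lia.
rewrite /colb /row /= eqxx !orbT.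
have -> : (i.-1).+1 == i by rewrite prednK.
have E2 : ((i.-1).+1 == i.+1) = false by apply/eqP; lia.
by case: (j \in nth set0 B i); case: (j \in nth set0 B i.-1); rewrite /= ?eqxx ?E2.
Qed.

Lemma colb_fst i B j x : x \in colb i B j -> x.1 = j.
Proof.
rewrite /colb mem_cat => /orP [];
  by case: ifP => _; rewrite ?inE // => /eqP ->.
Qed.

Lemma iter_mem m (s : seq ('I_n * bool)) z : z \in iter m (@reduce1 'I_n) s -> z \in s.
Proof.
elim: m => [|m IH] //= H.
by apply: IH; apply: red_mem.
Qed.

Lemma mem_flat_colb i B x : (x \in flatten (map (colb i B) (enum 'I_n))) = (x \in colb i B x.1).
Proof.
apply/idP/idP.
  case/flattenP => s /mapP [k _ ->] Hx.
  by rewrite (colb_fst Hx).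
move=> Hx; apply/flattenP; exists (colb i B x.1) => //.
by apply: map_f; rewrite mem_enum.
Qed.

Lemma flat_uniq i B (ks : seq 'I_n) : uniq ks -> uniq (flatten (map (colb i B) ks)).
Proof.
elim: ks => [|k ks IH] //= /andP [Hk Hu].
rewrite cat_uniq IH // andbT; apply/andP; split.
  by rewrite /colb; case: ifP; case: ifP => //= _ _; rewrite inE xpair_eqE andbF.
apply/hasPn => x /flattenP [s /mapP [k' Hk' ->] Hx].
apply/negP => Hx'.
have E : k = k' by rewrite -(colb_fst Hx') (colb_fst Hx).
by move: Hk; rewrite E Hk'.
Qed.

Lemma brk_uniq i (B : seq {set 'I_n}) : 0 < i -> i < size B -> uniq (brk i B).
Proof. by move=> Hi HL; rewrite brk_eq //; apply: flat_uniq; apply: enum_uniq. Qed.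

Lemma size_brk i (B : seq {set 'I_n}) : size (brk i B) <= size (cwp B).
Proof. by rewrite /brk size_map size_filter count_size. Qed.

Lemma colb_only i B j b k : (j, b) \in colb i B k -> k = j.
Proof. by move/colb_fst. Qed.

Lemma S1 i (B : seq {set 'I_n}) j : 0 < i -> i < size B -> (j, true) \in unmatched i B ->
  j \in row B i /\ j \notin row B i.-1.
Proof.
move=> Hi HL Hu.
have Hb := iter_mem Hu.
rewrite brk_eq // mem_flat_colb /colb /= mem_cat in Hb.
have HR : j \in row B i.
  apply/negPn/negP => Hn; move: Hb; rewrite (negbTE Hn) /=.
  by case: ifP => _; rewrite ?inE // xpair_eqE andbF.
split => //; apply/negP => HR0.
have Hn : nxt (j, true) (brk i B) = Some (j, false).
  rewrite brk_eq //; apply: (@nxt_flat1 _ _ _ _ j).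
  - by rewrite mem_enum.
  - by move=> k /colb_only.
  - by rewrite /colb HR HR0 /= eqxx.
have := @U1 _ (j,true) (j,false) (brk i B) (size (cwp B)) (brk_uniq Hi HL) isT isT Hn (size_brk i B).
by rewrite /unmatched in Hu; rewrite Hu.
Qed.

Lemma S2 i (B : seq {set 'I_n}) (j j' : 'I_n) : 0 < i -> i < size B -> val j' = (val j).+1 ->
  j \in row B i -> j \notin row B i.-1 -> j' \in row B i -> j' \notin row B i.-1 ->
  (j', true) \in unmatched i B -> (j, true) \in unmatched i B.
Proof.
move=> Hi HL Ej HR HR0 HR' HR0' Hu.
have Hn : nxt (j, true) (brk i B) = Some (j', true).
  rewrite brk_eq //; apply: (@nxt_flat2 _ _ _ _ j j' _ _ [::]).
  - exact: nxt_ord.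
  - by rewrite /colb HR (negbTE HR0).
  - by rewrite /colb HR' (negbTE HR0').
  - by move=> k /colb_only.
have Nj : (j, true) != (j', true).
  by rewrite xpair_eqE andbT; apply/eqP => E; move: Ej; rewrite E; lia.
exact: (@U2 _ (j,true) (j',true) (brk i B) (size (cwp B)) (brk_uniq Hi HL) isT isT Nj Hn Hu).
Qed.

Lemma S3 i (B : seq {set 'I_n}) (j j' : 'I_n) : 0 < i -> i < size B -> val j' = (val j).+1 ->
  j \in row B i -> j \notin row B i.-1 -> j' \notin row B i -> j' \in row B i.-1 ->
  (j, true) \notin unmatched i B.
Proof.
move=> Hi HL Ej HR HR0 HR' HR0'.
have Hn : nxt (j, true) (brk i B) = Some (j', false).
  rewrite brk_eq //; apply: (@nxt_flat2 _ _ _ _ j j' _ _ [::]).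
  - exact: nxt_ord.
  - by rewrite /colb HR (negbTE HR0).
  - by rewrite /colb HR0' (negbTE HR').
  - by move=> k /colb_only.
exact: (@U1 _ (j,true) (j',false) (brk i B) (size (cwp B)) (brk_uniq Hi HL) isT isT Hn (size_brk i B)).
Qed.

Lemma S4 i (B : seq {set 'I_n}) (j : 'I_n) : 0 < i -> i < size B ->
  j \in row B i -> j \notin row B i.-1 ->
  (forall k : 'I_n, val j < val k -> k \notin row B i.-1) ->
  (j, true) \in unmatched i B.
Proof.
move=> Hi HL HR HR0 Hk.
have [r Hr Hrk] := aft_ord j.
have Ha : aft (j, true) (brk i B) = Some (flatten (map (colb i B) r)).
  rewrite brk_eq // (@aft_flat _ _ _ _ j).
  - by rewrite Hr.
  - by rewrite /colb HR (negbTE HR0).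
  - by move=> k /colb_only.
apply: (@U3 _ (j,true) (brk i B) _ (size (cwp B)) (brk_uniq Hi HL) isT Ha).
apply: good_flat => k /Hrk /Hk Hk0.
by rewrite /colb (negbTE Hk0) cats0; case: ifP.
Qed.

End Cols.


Section Est.
Variable n : nat.
Notation mlq := (seq {set 'I_n}).

Definition SS i (B : mlq) := [set j : 'I_n | (j, true) \in unmatched i B].

Lemma nth_estar i (B : mlq) r : i < size B ->
  nth set0 (estar i B) r =
  if r.+1 == i then row B r :|: SS i B
  else if r.+1 == i.+1 then row B r :\: SS i B else row B r.
Proof.
move=> HL; rewrite /estar /=.
case: (ltnP r (size B)) => Hr.
  by rewrite (nth_map 0) ?size_iota // nth_iota.
rewrite nth_default ?size_map ?size_iota //.
have -> : (r.+1 == i) = false by apply/eqP; lia.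
have -> : (r.+1 == i.+1) = false by apply/eqP; lia.
by rewrite /row nth_default.
Qed.

Lemma size_estar i (B : mlq) : size (estar i B) = size B.
Proof. by rewrite /estar size_map size_iota. Qed.

Definition cnt (B : mlq) (j : 'I_n) r := count (fun t => j \in nth set0 B t) (iota 0 r).

Lemma cntS (B : mlq) j r : cnt B j r.+1 = cnt B j r + (j \in row B r).
Proof. by rewrite /cnt -addn1 iotaD count_cat /= addn0. Qed.

Lemma cnt0 (B : mlq) j : cnt B j 0 = 0.
Proof. by []. Qed.

Lemma cnt_le (B : mlq) j r : cnt B j r <= r.
Proof. by rewrite /cnt (leq_trans (count_size _ _)) // size_iota. Qed.

Lemma SS_sub i (B : mlq) j : 0 < i -> i < size B -> j \in SS i B ->
  j \in row B i /\ j \notin row B i.-1.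
Proof. by move=> Hi HL; rewrite inE; apply: S1. Qed.

Lemma cnt_estar i (B : mlq) j r : 0 < i -> i < size B ->
  cnt (estar i B) j r = cnt B j r + ((r == i) && (j \in SS i B)).
Proof.
move=> Hi HL.
elim: r => [|r IH].
  by rewrite !cnt0 /=; have -> : (0 == i) = false by apply/eqP; lia.
rewrite !cntS /row nth_estar // IH.
have HS := @SS_sub i B j Hi HL.
case: (r.+1 =P i) => [E|NE].
  have E1 : (r == i) = false by apply/eqP; lia.
  rewrite E1 in_setU /=.
  case: (boolP (j \in SS i B)) => Hj /=.
    have [_] := HS Hj; rewrite -E /= /row => /negbTE ->.
    by rewrite addn0 addn1.
  by rewrite !addn0 orbF.
case: (r =P i) => [E|NE2].
  subst r; rewrite eqxx /= in_setD.
  case: (boolP (j \in SS i B)) => Hj /=.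
    have [H1 _] := HS Hj; rewrite /row in H1; rewrite H1.
    by rewrite addn0 addn1.
  by rewrite !addn0.
have E1 : (r.+1 == i.+1) = false by apply/eqP; lia.
rewrite E1 /= !addn0.
by case: (r =P i) => // ; rewrite addn0.
Qed.

Definition LAT (B : mlq) := forall (j j' : 'I_n) r, val j' = (val j).+1 -> cnt B j' r <= cnt B j r.

Lemma cnt_estar_ne i (B : mlq) j r : 0 < i -> i < size B -> r != i ->
  cnt (estar i B) j r = cnt B j r.
Proof. by move=> Hi HL Hr; rewrite cnt_estar // (negbTE Hr) addn0. Qed.

Lemma cnt_pred (B : mlq) j i : 0 < i -> cnt B j i = cnt B j i.-1 + (j \in row B i.-1).
Proof. by move=> Hi; rewrite -cntS prednK. Qed.

Lemma A_fwd i (B : mlq) : 0 < i -> i < size B -> LAT B -> LAT (estar i B).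
Proof.
move=> Hi HL HB j j' r Ej.
rewrite !cnt_estar //.
case: (r =P i) => [->|NE] /=; last by rewrite !addn0; apply: HB.
have Hl := HB j j' i Ej.
case: (boolP (j' \in SS i B)) => Hj'; last by rewrite addn0; apply: leq_trans Hl (leq_addr _ _).
case: (boolP (j \in SS i B)) => Hj; first by rewrite leq_add2r.
rewrite addn0 addn1.
case: (ltngtP (cnt B j' i) (cnt B j i)) => // Heq; first by move: Hl; rewrite leqNgt Heq.
exfalso.
have [Hr' Hr0'] := SS_sub Hi HL Hj'.
have H1 := HB j j' i.+1 Ej; rewrite !cntS Hr' Heq in H1.
have Hr : j \in row B i by move: H1; case: (j \in row B i) => //=; lia.
have H2 := HB j j' i.-1 Ej.
rewrite (cnt_pred B j' Hi) (negbTE Hr0') addn0 in Heq.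
have Hr0 : j \notin row B i.-1.
  apply/negP => Hj0; move: Heq; rewrite (cnt_pred B j Hi) Hj0 => Heq.
  by move: H2; rewrite Heq /=; lia.
move: Hj; rewrite inE (S2 Hi HL Ej Hr Hr0 Hr' Hr0') //.
by move: Hj'; rewrite inE.
Qed.

Lemma A_bwd i (B : mlq) : 0 < i -> i < size B -> LAT (estar i B) -> LAT B.
Proof.
move=> Hi HL HB j j' r Ej.
case: (r =P i) => [Er|NE]; last first.
  have := HB j j' r Ej; rewrite !cnt_estar_ne //; by apply/eqP.
subst r.
have Hl := HB j j' i Ej; rewrite !cnt_estar // eqxx /= in Hl.
case: (boolP (j \in SS i B)) Hl => Hj Hl; last by move: Hl; case: (j' \in SS i B) => /=; lia.
case: (boolP (j' \in SS i B)) Hl => Hj' Hl; first by move: Hl => /=; lia.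
move: Hl => /= Hl.
case: (leqP (cnt B j' i) (cnt B j i)) => // Heq.
exfalso.
have Heq2 : cnt B j' i = (cnt B j i).+1 by lia.
have [Hr Hr0] := SS_sub Hi HL Hj.
have Hm : i.-1 != i by apply/eqP; lia.
have Hp : i.+1 != i by apply/eqP; lia.
have H1 := HB j j' i.-1 Ej; rewrite !cnt_estar_ne // in H1.
have H2 := HB j j' i.+1 Ej; rewrite !cnt_estar_ne // !cntS Hr in H2.
move: Heq2; rewrite (cnt_pred B j' Hi) (cnt_pred B j Hi) (negbTE Hr0) addn0 => Heq2.
have Hr0' : j' \in row B i.-1.
  by move: Heq2 H1; case: (j' \in row B i.-1) => //=; lia.
have Hr' : j' \notin row B i.
  apply/negP => Hj1; move: H2 Heq2.
  rewrite Hj1 (cnt_pred B j' Hi) (cnt_pred B j Hi) (negbTE Hr0) Hr0' /=; lia.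
have := S3 Hi HL Ej Hr Hr0 Hr' Hr0'.
by move: Hj; rewrite inE => ->.
Qed.

End Est.


Section Grav.
Variable n : nat.
Notation mlq := (seq {set 'I_n}).

Definition nest (B : mlq) a b := forall t, a <= t -> t.+1 < b -> row B t.+1 \subset row B t.

Lemma LAT_trans (B : mlq) : LAT B -> forall (j k : 'I_n) r, val j <= val k -> cnt B k r <= cnt B j r.
Proof.
move=> HB j k r Hjk.
suff H : forall d (k : 'I_n), val k = val j + d -> cnt B k r <= cnt B j r.
  by apply: (H (val k - val j)); rewrite subnKC.
elim=> [|d IH] k' Ek.
  by have -> : k' = j by apply: val_inj; rewrite Ek addn0.
have Hk' : val k' < n := ltn_ord k'.
have Hd : val j + d < n by lia.
apply: leq_trans (IH (Ordinal Hd) erefl).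
by apply: HB; rewrite /= Ek addnS.
Qed.

Lemma cnt_full (B : mlq) j r : (forall t, t < r -> j \in row B t) -> cnt B j r = r.
Proof.
move=> H; rewrite /cnt (@eq_in_count _ _ predT) ?count_predT ?size_iota //.
by move=> t; rewrite mem_iota add0n => /andP [_ Ht]; apply: H.
Qed.

Lemma nested_down (B : mlq) i k : nest B 0 i -> k \in row B i.-1 -> forall t, t < i -> k \in row B t.
Proof.
move=> Hn Hk.
suff H : forall d, d < i -> k \in row B (i.-1 - d).
  move=> t Ht; have := H (i.-1 - t); rewrite (_ : i.-1 - (i.-1 - t) = t); last by lia.
  by apply; lia.
elim=> [|d IH] Hd; first by rewrite subn0.
have := Hn (i.-1 - d.+1) (leq0n _); rewrite (_ : (i.-1 - d.+1).+1 = i.-1 - d); last by lia.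
move=> /(_ ltac:(lia)) /subsetP; apply; apply: IH; lia.
Qed.

Lemma G_S i (B : mlq) : 0 < i -> i < size B -> LAT B -> nest B 0 i ->
  SS i B = row B i :\: row B i.-1.
Proof.
move=> Hi HL HB Hn.
apply/setP => j; rewrite in_setD.
apply/idP/idP.
  by move=> /(SS_sub Hi HL) [-> ->].
move=> /andP [Hr0 Hr].
rewrite inE; apply: (S4 Hi HL Hr Hr0) => k Hjk.
apply/negP => Hk.
have Hc1 : cnt B k i = i by apply: cnt_full; apply: nested_down Hk.
have Hc2 : cnt B j i <= i.-1.
  by rewrite (cnt_pred B j Hi) (negbTE Hr0) addn0 cnt_le.
have := LAT_trans HB i (ltnW Hjk); lia.
Qed.

Lemma row_grav i (B : mlq) t : 0 < i -> i < size B -> LAT B -> nest B 0 i ->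
  row (estar i B) t =
  if t == i.-1 then row B i.-1 :|: row B i
  else if t == i then row B i :&: row B i.-1 else row B t.
Proof.
move=> Hi HL HB Hn.
rewrite /row nth_estar // G_S // -/(row B t).
case: (t =P i.-1) => [->|N1].
  rewrite prednK // eqxx; apply/setP => x; rewrite !inE.
  by case: (x \in row B i.-1); case: (x \in row B i).
have -> : (t.+1 == i) = false by apply/eqP; lia.
case: (t =P i) => [->|N2].
  rewrite eqxx; apply/setP => x; rewrite !inE.
  by case: (x \in row B i.-1); case: (x \in row B i).
by have -> : (t.+1 == i.+1) = false by apply/eqP; lia.
Qed.

Definition Inv k m (X : mlq) :=
  [/\ LAT X, nest X 0 m.-1, nest X m.-1 k.+1 &
      (1 < m <= k -> row X m \subset row X m.-2)].

Lemma stage_step k (X : mlq) m : 1 < m -> m <= k.+1 -> k < size X -> Inv k m X -> Inv k m.-1 (estar m.-1 X).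
Proof.
move=> Hm Hmk HL [HB Hn1 Hn2 H3].
set i := m.-1.
have Hi : 0 < i by rewrite /i; lia.
have HiL : i < size X by rewrite /i; lia.
have Hrg := fun t => row_grav t Hi HiL HB Hn1.
split.
- exact: A_fwd.
- move=> t _ Ht; rewrite !Hrg.
  have -> : (t.+1 == i.-1) = false by apply/eqP; lia.
  have -> : (t.+1 == i) = false by apply/eqP; lia.
  have -> : (t == i.-1) = false by apply/eqP; lia.
  have -> : (t == i) = false by apply/eqP; lia.
  by apply: Hn1 => //; rewrite /i; lia.
- move=> t Ht Htk; rewrite !Hrg.
  case: (t =P i.-1) => [Et|N1].
    have -> : (t.+1 == i.-1) = false by apply/eqP; lia.
    have -> : (t.+1 == i) by apply/eqP; lia.
    apply/subsetP => x; rewrite !inE => /andP [-> _]; by rewrite orbT.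
  have Ht' : i <= t by lia.
  case: (t =P i) => [Et|N2].
    have -> : (t.+1 == i.-1) = false by apply/eqP; lia.
    have -> : (t.+1 == i) = false by apply/eqP; lia.
    subst t.
    apply/subsetP => x Hx; rewrite inE.
    apply/andP; split.
      by apply: (subsetP (Hn2 i _ _)) => //; rewrite /i; lia.
    apply: (subsetP (H3 _)); last by rewrite /i prednK in Hx; [exact: Hx | lia].
    by rewrite /i in Htk *; lia.
  have -> : (t.+1 == i.-1) = false by apply/eqP; lia.
  have -> : (t.+1 == i) = false by apply/eqP; lia.
  by apply: Hn2 => //; rewrite /i; lia.
- move=> Hc; rewrite !Hrg.
  have -> : (i == i.-1) = false by apply/eqP; lia.
  rewrite eqxx.
  have -> : (i.-2 == i.-1) = false by apply/eqP; lia.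
  have -> : (i.-2 == i) = false by apply/eqP; lia.
  apply/subsetP => x; rewrite inE => /andP [_ Hx].
  apply: (subsetP (Hn1 i.-2 (leq0n _) _)); first by rewrite /i; lia.
  by rewrite (_ : i.-2.+1 = i.-1) //; lia.
Qed.

Lemma size_foldr_estar (X : mlq) l : size (foldr (@estar n) X l) = size X.
Proof. by elim: l => [|a l IH] //=; rewrite size_estar. Qed.

Lemma stage k (X : mlq) : 0 < k -> k < size X -> LAT X -> nest X 0 k ->
  LAT (estar_int 1 k X) /\ nest (estar_int 1 k X) 0 k.+1.
Proof.
move=> Hk HL HB Hn.
suff H : forall c, c <= k -> Inv k (k.+1 - c) (foldr (@estar n) X (iota (k.+1 - c) c)).
  have := H k (leqnn _); rewrite /estar_int subSnn subn1 /=.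
  by case.
elim=> [|c IH] Hc.
  rewrite subn0 /=; split => //.
  by move=> t Ht Ht'; lia.
  by move=> /andP [_]; lia.
have -> : k.+1 - c.+1 = (k.+1 - c).-1 by lia.
have -> : iota (k.+1 - c).-1 c.+1 = (k.+1 - c).-1 :: iota (k.+1 - c) c.
  by rewrite /= prednK //; lia.
rewrite /=; apply: stage_step.
- lia.
- lia.
- by rewrite size_foldr_estar.
- by apply: IH; lia.
Qed.

End Grav.


Section Rho.
Variable n : nat.
Notation mlq := (seq {set 'I_n}).

Lemma size_estar_int a k (X : mlq) : size (estar_int a k X) = size X.
Proof. exact: size_foldr_estar. Qed.

Lemma rhoN_nest (B : mlq) : LAT B -> forall t, row (rhoN B) t.+1 \subset row (rhoN B) t.
Proof.
move=> HB.
pose f := fun (acc : mlq) k => estar_int 1 k acc.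
have H : forall k, k < size B ->
  [/\ size (foldl f B (iota 1 k)) = size B, LAT (foldl f B (iota 1 k)) & nest (foldl f B (iota 1 k)) 0 k.+1].
  elim=> [|k IH] Hk.
    by split => // t _ Ht; lia.
  have [Hs HL Hn] := IH (ltnW Hk).
  have E : iota 1 k.+1 = iota 1 k ++ [:: k.+1].
    by rewrite -(addn1 k) iotaD /=; congr (_ ++ [:: _]); lia.
  rewrite E foldl_cat /=.
  have Hk' : k.+1 < size (foldl f B (iota 1 k)) by rewrite Hs.
  have [HL' Hn'] := stage (ltn0Sn k) Hk' HL Hn.
  by split => //; rewrite /f size_estar_int.
move=> t.
case: (posnP (size B)) => HB0.
  by move/size0nil: HB0 => ->; rewrite /rhoN /= /row nth_nil sub0set.
have Hlt : (size B).-1 < size B by lia.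
have [Hs _ Hn] := H (size B).-1 Hlt.
rewrite /rhoN -/f.
case: (ltnP t.+1 (size B)) => Ht.
  by apply: Hn => //; rewrite prednK.
by rewrite /row [nth _ _ t.+1]nth_default ?Hs // sub0set.
Qed.

Lemma foldr_estar_inv (X : mlq) (l : seq nat) j : all (fun i => 0 < i < size X) l ->
  (LAT (foldr (@estar n) X l) -> LAT X) /\ cnt (foldr (@estar n) X l) j (size X) = cnt X j (size X).
Proof.
elim: l => [|a l IH] //= /andP [/andP [Ha HaL] Hl].
have [IH1 IH2] := IH Hl.
have Hs := size_foldr_estar X l.
split.
  by move=> H; apply: IH1; apply: (A_bwd Ha) => //; rewrite Hs.
rewrite cnt_estar_ne ?Hs //; apply/eqP; lia.
Qed.

Lemma foldl_stage_inv (ks : seq nat) (X : mlq) j : all (fun k => k < size X) ks ->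
  (LAT (foldl (fun acc k => estar_int 1 k acc) X ks) -> LAT X) /\
  cnt (foldl (fun acc k => estar_int 1 k acc) X ks) j (size X) = cnt X j (size X).
Proof.
elim: ks X => [|k ks IH] X //= /andP [Hk Hks].
have Hall : all (fun i => 0 < i < size X) (iota 1 (k.+1 - 1)).
  by apply/allP => i; rewrite mem_iota; lia.
have [H1 H2] := foldr_estar_inv j Hall.
have Hs : size (estar_int 1 k X) = size X by apply: size_estar_int.
have Hks' : all (fun k' => k' < size (estar_int 1 k X)) ks by rewrite Hs.
have [IH1 IH2] := IH (estar_int 1 k X) Hks'.
split; first by move=> H; apply: H1; apply: IH1.
by rewrite -Hs IH2 Hs; apply: H2.
Qed.

Lemma rhoN_inv (B : mlq) j : (LAT (rhoN B) -> LAT B) /\ cnt (rhoN B) j (size B) = cnt B j (size B).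
Proof.
apply: foldl_stage_inv.
by apply/allP => k; rewrite mem_iota; lia.
Qed.

Lemma size_foldl_stage (ks : seq nat) (X : mlq) :
  size (foldl (fun acc k => estar_int 1 k acc) X ks) = size X.
Proof. by elim: ks X => [|k ks IH] X //=; rewrite IH size_estar_int. Qed.

Lemma size_rhoN (B : mlq) : size (rhoN B) = size B.
Proof. exact: size_foldl_stage. Qed.

Lemma col_count_cnt (B : mlq) j : col_count B j = cnt B j (size B).
Proof. by rewrite /col_count /cnt -{1}(mkseq_nth set0 B) /mkseq count_map. Qed.

End Rho.


Lemma geq_trans : transitive geq.
Proof. by move=> a b c H1 H2; apply: leq_trans H2 H1. Qed.

Lemma nth_le_head (mu : seq nat) j : sorted geq mu -> nth 0 mu j <= head 0 mu.
Proof.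
case: mu => [|x mu] Hs; first by rewrite nth_nil.
case: j => [|j] //=.
have Hall := order_path_min geq_trans Hs.
case: (ltnP j (size mu)) => Hj.
  by move/allP: Hall => /(_ _ (mem_nth 0 Hj)).
by rewrite nth_default.
Qed.

Lemma Kcount (mu : seq nat) j r : sorted geq mu ->
  (j < count (fun x => r < x) mu) = (r < nth 0 mu j).
Proof.
elim: mu j => [|x mu IH] j Hs /=; first by rewrite nth_nil ltn0.
have Hs' : sorted geq mu := path_sorted Hs.
have Hall := order_path_min geq_trans Hs.
case: (ltnP r x) => Hrx.
  case: j => [|j] //=.
  by rewrite add1n ltnS IH.
have -> : count (fun x0 => r < x0) mu = 0.
  apply/eqP; rewrite -leqn0 leqNgt -has_count; apply/hasPn => y Hy.
  by move/allP: Hall => /(_ y Hy) Hyx; rewrite -leqNgt (leq_trans Hyx).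
rewrite ltn0; apply/esym/negbTE; rewrite -leqNgt.
case: j => [|j] //=.
case: (ltnP j (size mu)) => Hj; last by rewrite nth_default.
by move/allP: Hall => /(_ _ (mem_nth 0 Hj)) H; apply: leq_trans H Hrx.
Qed.

Lemma conj_sorted (l : seq nat) : sorted geq (conj l).
Proof.
rewrite /conj sorted_map.
apply: (sub_sorted _ (iota_sorted 0 _)) => a b Hab /=.
by apply: sub_count => x /= Hx; apply: leq_ltn_trans Hab Hx.
Qed.

Lemma nth_conj (mu : seq nat) r :
  nth 0 (conj mu) r = if r < head 0 mu then count (fun x => r < x) mu else 0.
Proof.
rewrite /conj; case: ifP => Hr.
  by rewrite (nth_map 0) ?size_iota // nth_iota.
by rewrite nth_default // size_map size_iota leqNgt Hr.
Qed.

Section Fin.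
Variable n : nat.
Notation mlq := (seq {set 'I_n}).

Lemma nth_strip (X : mlq) t : nth set0 (strip X) t = nth set0 X t.
Proof.
elim: X t => [|s X IH] t //=.
case: ifP => [/andP [/eqP E /eqP ->]|_].
  case: t => [|t] //=; by rewrite -IH E nth_nil.
by case: t.
Qed.

Lemma strip_nil (X : mlq) : (forall r, nth set0 X r = set0) -> strip X = [::].
Proof.
elim: X => [|s X IH] // H /=.
rewrite IH; last by move=> r; apply: (H r.+1).
have Hs : s = set0 := H 0.
by rewrite Hs !eqxx.
Qed.

Lemma strip_nth (X Y : mlq) : (forall r, nth set0 X r = nth set0 Y r) -> strip X = strip Y.
Proof.
elim: X Y => [|s X IH] Y H.
  have HY : strip Y = [::] by apply: strip_nil => r; rewrite -H nth_nil.
  by rewrite HY.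
case: Y H => [|t Y] H.
  have HX : strip (s :: X) = [::] by apply: strip_nil => r; rewrite H nth_nil.
  by rewrite HX.
have Ets : s = t := H 0.
rewrite -Ets.
rewrite /= (IH Y) // => r; exact: (H r.+1).
Qed.

Lemma cnt_ext (X Y : mlq) j r : (forall t, nth set0 X t = nth set0 Y t) -> cnt X j r = cnt Y j r.
Proof. by move=> H; rewrite /cnt; apply: eq_count => t; rewrite H. Qed.

Lemma LAT_ext (X Y : mlq) : (forall t, nth set0 X t = nth set0 Y t) -> LAT X -> LAT Y.
Proof. by move=> H HX j j' r Ej; rewrite -!(cnt_ext _ _ H); apply: HX. Qed.

Lemma nest_mem (X : mlq) j r : (forall t, row X t.+1 \subset row X t) ->
  (j \in row X r) = (r < cnt X j (size X)).
Proof.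
move=> Hn.
case: (ltnP r (size X)) => Hr; last first.
  rewrite /row nth_default // inE.
  by apply/esym/negbTE; rewrite -leqNgt (leq_trans (cnt_le _ _ _)).
elim: (size X) Hr => [|L IH] Hr //.
rewrite cntS.
case: (boolP (j \in row X L)) => HL.
  have HL' : forall t, t <= L -> j \in row X t.
    move=> t Ht; rewrite -(subKn Ht).
    elim: (L - t) (leq_subr t L) => [|d IHd] Hd; first by rewrite subn0.
    have := Hn (L - d.+1); rewrite (_ : (L - d.+1).+1 = L - d); last by lia.
    by move/subsetP; apply; apply: IHd; lia.
  rewrite HL' ?(cnt_full (r := L)); [by rewrite addn1 | |by lia].
  by move=> t Ht; apply: HL'; lia.
rewrite addn0.
case: (ltnP r L) => Hr'; first by apply: IH.
have -> : r = L by lia.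
by rewrite (negbTE HL) ltnNge cnt_le.
Qed.

Lemma nth_Mlq (mu : seq nat) r : nth set0 (Mlq n mu) r = [set i : 'I_n | i < nth 0 (conj mu) r].
Proof.
rewrite /Mlq; case: (ltnP r (size (conj mu))) => Hr.
  by rewrite (nth_map 0).
have Hr' : size (iota 0 (head 0 mu)) <= r by move: Hr; rewrite /conj size_map.
by rewrite !nth_default ?size_map //.
Qed.

Lemma LAT_Mlq (mu : seq nat) : LAT (Mlq n mu).
Proof.
move=> j j' r Ej; rewrite /cnt; apply: sub_count => t /=.
rewrite nth_Mlq !inE Ej => H.
by apply: ltn_trans H.
Qed.

Lemma final_eq (X : mlq) (la : seq nat) :
  (forall t, row X t.+1 \subset row X t) ->
  (forall j : 'I_n, cnt X j (size X) = nth 0 (conj la) j) ->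
  strip X = strip (Mlq n (conj la)).
Proof.
move=> Hn Hc; apply: strip_nth => r.
apply/setP => j.
rewrite -/(row X r) nest_mem // Hc nth_Mlq inE [nth 0 (conj (conj la)) r]nth_conj.
have Hs := conj_sorted la.
case: ifP => Hr.
  by rewrite Kcount.
rewrite ltn0; apply/negbTE; rewrite -leqNgt.
by apply: leq_trans (nth_le_head _ Hs) _; rewrite leqNgt Hr.
Qed.

End Fin.


Lemma take_flatten_dec (T : Type) (ss : seq (seq T)) k :
  exists r c, take k (flatten ss) = flatten (take r ss) ++ take c (nth [::] ss r).
Proof.
elim: ss k => [|s ss IH] k.
  by exists 0, 0.
rewrite /= take_cat.
case: ifP => Hk.
  by exists 0, k.
have [r [c E]] := IH (k - size s).
by exists r.+1, c; rewrite E /= catA.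
Qed.

Lemma sorted_prefix (s : seq nat) c x y : sorted ltn s -> y \in take c s -> x \in s -> x < y ->
  x \in take c s.
Proof.
move=> Hs Hy Hx Hxy.
move: Hx; rewrite -{1}(cat_take_drop c s) mem_cat => /orP [//|Hd].
move: Hs; rewrite (sorted_pairwise ltn_trans) -{1}(cat_take_drop c s) pairwise_cat.
case/and3P => /allrelP H _ _.
by have := H y x Hy Hd; rewrite ltnNge ltnW.
Qed.

Section Lat.
Variable n : nat.
Notation mlq := (seq {set 'I_n}).

Definition roww (s : {set 'I_n}) := [seq (val j).+1 | j <- enum 'I_n & j \in s].

Lemma succval_inj : injective (fun j : 'I_n => (val j).+1).
Proof. by move=> a b [E]; apply: val_inj. Qed.

Lemma roww_uniq s : uniq (roww s).
Proof. by rewrite /roww (map_inj_uniq succval_inj) filter_uniq // enum_uniq. Qed.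

Lemma roww_mem s (j : 'I_n) : ((val j).+1 \in roww s) = (j \in s).
Proof. by rewrite /roww (mem_map succval_inj) mem_filter mem_enum andbT. Qed.

Lemma roww_big s a : n <= a -> a.+1 \notin roww s.
Proof.
move=> Ha; apply/negP => /mapP [j _ [E]].
by have := ltn_ord j; rewrite -E ltnNge Ha.
Qed.

Lemma roww_sorted s : sorted ltn (roww s).
Proof.
rewrite /roww sorted_map; apply: sorted_filter.
  by move=> a b c /= H1 H2; apply: ltn_trans H1 H2.
apply: (@sub_sorted _ (relpre val ltn)) => [a b /=|]; first by rewrite ltnS.
by rewrite -sorted_map val_enum_ord iota_ltn_sorted.
Qed.

Lemma roww_set0 : roww set0 = [::].
Proof. by rewrite /roww filter_nil // => x _; rewrite inE. Qed.

Lemma nth_roww (B : mlq) r : nth [::] (map roww B) r = roww (nth set0 B r).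
Proof.
case: (ltnP r (size B)) => Hr; first by rewrite (nth_map set0).
by rewrite !nth_default ?size_map // roww_set0.
Qed.

Lemma W_cnt (B : mlq) (j : 'I_n) r :
  count_mem (val j).+1 (flatten (map roww (take r B))) = cnt B j r.
Proof.
elim: r => [|r IH]; first by rewrite take0.
rewrite cntS -IH.
case: (ltnP r (size B)) => Hr.
  rewrite (take_nth set0 Hr) map_rcons flatten_rcons count_cat.
  by rewrite [count_mem _ (roww _)]count_uniq_mem ?roww_uniq // roww_mem.
rewrite (take_oversize (leqW Hr)) (take_oversize Hr).
by rewrite /row nth_default // inE addn0.
Qed.

Lemma W_big (l : mlq) a : n <= a -> count_mem a.+1 (flatten (map roww l)) = 0.
Proof.
move=> Ha; apply/count_memPn/negP => /flattenP [s /mapP [x _ ->]].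
by apply/negP; apply: roww_big.
Qed.

Lemma rw_eq (B : mlq) : rw B = flatten (map roww B).
Proof. by []. Qed.

Lemma L1 (B : mlq) : lattice (rw B) <-> LAT B.
Proof.
rewrite rw_eq; split.
  move=> HL j j' r Ej.
  have Ed : flatten (map roww B) = flatten (map roww (take r B)) ++ flatten (map roww (drop r B)).
    by rewrite -flatten_cat -map_cat cat_take_drop.
  have := HL (size (flatten (map roww (take r B)))) (val j).
  rewrite Ed take_size_cat //.
  by rewrite (W_cnt B j r) -Ej (W_cnt B j' r).
move=> HB k a.
have [r [c E]] := take_flatten_dec (map roww B) k.
rewrite E -map_take !count_cat nth_roww.
set R := nth set0 B r.
case: (ltnP a.+1 n) => Ha; last first.
  rewrite W_big //.
  have := roww_big R Ha => Hn.
  have : a.+2 \notin take c (roww R).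
    by apply: contra Hn; apply: mem_take.
  move/count_memPn => ->; lia.
pose j := Ordinal (ltnW Ha); pose j' := Ordinal Ha.
have Ej : val j' = (val j).+1 by [].
have -> : a.+2 = (val j').+1 by [].
have -> : a.+1 = (val j).+1 by [].
rewrite !W_cnt.
have Hu := roww_uniq R.
have Hut : uniq (take c (roww R)) by rewrite take_uniq.
rewrite !count_uniq_mem //.
case: (boolP ((val j').+1 \in take c (roww R))) => Hy /=; last first.
  by rewrite addn0; apply: leq_trans (HB j j' r Ej) (leq_addr _ _).
have Hj'R : j' \in R by rewrite -roww_mem (mem_take Hy).
case: (boolP (j \in R)) => HjR.
  have Hx : (val j).+1 \in take c (roww R).
    apply: (sorted_prefix (roww_sorted R) Hy); first by rewrite roww_mem.
    by rewrite Ej.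
  by rewrite Hx leq_add2r; apply: HB.
have := HB j j' r.+1 Ej; rewrite !cntS (negbTE HjR) Hj'R /=.
by case: ((val j).+1 \in take c (roww R)) => /=; lia.
Qed.

End Lat.

Unset Implicit Arguments.

Theorem lemma4p23 (la mu : seq nat) (n : nat) (M : seq {set 'I_n}) :
  is_part la -> is_part mu -> 0 < n ->
  has_shape mu M ->
  size (conj la) <= n ->
  (forall j : 'I_n, col_count M j = nth 0 (conj la) j) ->
  (strip (rhoN M) = strip (Mlq n (conj la)) <-> lattice (rw M)).
Proof.
move=> _ _ Hn _ _ Hc.
split.
  move=> H.
  have E : forall t, nth set0 (Mlq n (conj la)) t = nth set0 (rhoN M) t.
    by move=> t; rewrite -nth_strip -H nth_strip.
  have HL : LAT (rhoN M) := LAT_ext E (@LAT_Mlq n (conj la)).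
  apply/L1.
  exact: (rhoN_inv M (Ordinal Hn)).1 HL.
move/L1 => HB.
apply: final_eq.
  exact: rhoN_nest.
move=> j.
by rewrite size_rhoN (rhoN_inv M j).2 -col_count_cnt Hc.
Qed.
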